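(* Let $G$ be a finitely generated torsion-free nilpotent group. Then $G$ has a nontrivial abelian direct factor if and only if the image of the center $Z(G)$ in the abelianization $G/[G,G]$ contains a primitive element.
   Context: An element of a finitely generated abelian group $A$ is primitive if its image in the free abelian group $A/\mathrm{Tor}(A)$ is part of a basis of $A/\mathrm{Tor}(A)$, where $\mathrm{Tor}(A)$ is the torsion subgroup. *)

(* Defs.v *)
From Stdlib Require Import ZArith List.
Import ListNotations.
Set Implicit Arguments.

Record Group := {
  carrier :> Type;
  gmul : carrier -> carrier -> carrier;
  ginv : carrier -> carrier;
  gone : carrier;
  gmulA : forall x y z, gmul x (gmul y z) = gmul (gmul x y) z;
  gmul1 : forall x, gmul gone x = x;
  gmulV : forall x, gmul (ginv x) x = gone
}.

Section Defs.
Variable G : Group.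

Definition npow (g : G) (n : nat) : G := Nat.iter n (fun y => gmul G y g) (gone G).
Definition zpow (g : G) (z : Z) : G :=
  match z with
  | Z0 => gone G
  | Zpos p => npow g (Pos.to_nat p)
  | Zneg p => ginv G (npow g (Pos.to_nat p))
  end.

Definition comm (x y : G) : G := gmul G (gmul G (ginv G x) (ginv G y)) (gmul G x y).

Inductive gen (S : G -> Prop) : G -> Prop :=
| gen_in : forall x, S x -> gen S x
| gen_one : gen S (gone G)
| gen_mul : forall x y, gen S x -> gen S y -> gen S (gmul G x y)
| gen_inv : forall x, gen S x -> gen S (ginv G x).

Definition finitely_generated : Prop :=
  exists l : list G, forall g : G, gen (fun x => In x l) g.

Definition torsion_free : Prop :=
  forall (g : G) (n : nat), (0 < n)%nat -> npow g n = gone G -> g = gone G.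

Fixpoint gamma (i : nat) : G -> Prop :=
  match i with
  | O => fun _ => True
  | S j => gen (fun c => exists x y, gamma j x /\ c = comm x y)
  end.

Definition nilpotent : Prop :=
  exists c : nat, forall g, gamma c g -> g = gone G.

Definition center (z : G) : Prop := forall g, gmul G z g = gmul G g z.
Definition derived (g : G) : Prop := gamma 1 g.

Definition subgroup (H : G -> Prop) : Prop :=
  H (gone G) /\ (forall x y, H x -> H y -> H (gmul G x y)) /\
  (forall x, H x -> H (ginv G x)).
Definition normal (H : G -> Prop) : Prop :=
  subgroup H /\ forall x g, H x -> H (gmul G (gmul G (ginv G g) x) g).

Definition has_nontrivial_abelian_direct_factor : Prop :=
  exists H K : G -> Prop,
    normal H /\ normal K /\
    (forall x, H x -> K x -> x = gone G) /\
    (forall g, exists h k, H h /\ K k /\ g = gmul G h k) /\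
    (forall x y, H x -> H y -> gmul G x y = gmul G y x) /\
    (exists h, H h /\ h <> gone G).

(** In the abelianization A = G/[G,G]: the class of g is torsion in A. *)
Definition ab_torsion (g : G) : Prop :=
  exists n : nat, (0 < n)%nat /\ derived (npow g n).

Fixpoint lincomb (bs : list G) (ns : list Z) : G :=
  match bs, ns with
  | b :: bs', n :: ns' => gmul G (zpow b n) (lincomb bs' ns')
  | _, _ => gone G
  end.

(** The classes of bs in A/Tor(A) (A = G/[G,G]) form a basis of the free
    abelian group A/Tor(A): they span and are linearly independent. *)
Definition basis_mod_torsion (bs : list G) : Prop :=
  (forall x : G, exists ns : list Z, length ns = length bs /\
       ab_torsion (gmul G (ginv G x) (lincomb bs ns))) /\
  (forall ns : list Z, length ns = length bs ->
       ab_torsion (lincomb bs ns) -> Forall (fun n => n = 0%Z) ns).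

(** The class of g in A = G/[G,G] is primitive: its image in A/Tor(A) is
    part of a basis of A/Tor(A). *)
Definition ab_primitive (g : G) : Prop :=
  exists bs : list G, basis_mod_torsion (g :: bs).

End Defs.

(* Main.v *)
Require Import Defs.
From Stdlib Require Import ZArith List Lia Permutation Classical Setoid Morphisms.
Import ListNotations.
Set Implicit Arguments.

Section Basic.
Variable G : Group.
Local Infix "**" := (gmul G) (at level 40, left associativity).
Local Notation e := (gone G).
Local Notation iv := (ginv G).

Lemma mA x y z : x ** (y ** z) = x ** y ** z. Proof. apply gmulA. Qed.
Lemma m1 x : e ** x = x. Proof. apply gmul1. Qed.
Lemma mV x : iv x ** x = e. Proof. apply gmulV. Qed.

Lemma mVr x : x ** iv x = e.
Proof.
  rewrite <- (m1 (x ** iv x)). rewrite <- (mV (iv x)) at 1.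
  rewrite <- mA. rewrite (mA (iv x) x (iv x)). rewrite mV, m1. apply mV.
Qed.
Lemma m1r x : x ** e = x.
Proof. rewrite <- (mV x), mA, mVr, m1. reflexivity. Qed.
Lemma cancel_l a b c : a ** b = a ** c -> b = c.
Proof. intro H. rewrite <- (m1 b), <- (m1 c), <- (mV a), <- !mA, H. reflexivity. Qed.
Lemma cancel_r a b c : b ** a = c ** a -> b = c.
Proof. intro H. rewrite <- (m1r b), <- (m1r c), <- (mVr a), !mA, H. reflexivity. Qed.
Lemma inv_uniq a b : a ** b = e -> b = iv a.
Proof. intro H. apply (cancel_l a). rewrite H, mVr. reflexivity. Qed.
Lemma inv_inv a : iv (iv a) = a.
Proof. symmetry. apply inv_uniq. apply mV. Qed.
Lemma inv_mul a b : iv (a ** b) = iv b ** iv a.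
Proof. symmetry. apply inv_uniq. rewrite <- mA, (mA b), mVr, m1, mVr. reflexivity. Qed.
Lemma inv_e : iv e = e.
Proof. symmetry. apply inv_uniq. apply m1. Qed.
Lemma mVK a b : iv a ** (a ** b) = b. Proof. rewrite mA, mV, m1. reflexivity. Qed.
Lemma mKV a b : a ** (iv a ** b) = b. Proof. rewrite mA, mVr, m1. reflexivity. Qed.
Lemma mKr a b : a ** b ** iv b = a. Proof. rewrite <- mA, mVr, m1r. reflexivity. Qed.
Lemma mKVr a b : a ** iv b ** b = a. Proof. rewrite <- mA, mV, m1r. reflexivity. Qed.

Lemma comm_e x y : comm G x y = e -> x ** y = y ** x.
Proof.
  unfold comm. intro H. apply inv_uniq in H. rewrite H, inv_mul, !inv_inv. reflexivity.
Qed.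

Definition central (c : G) := forall w, c ** w = w ** c.
Lemma central_inv c : central c -> central (iv c).
Proof. intros Hc w. apply (cancel_l c). rewrite mA, mVr, m1, Hc, <- mA, mV, m1r. reflexivity. Qed.
Lemma central_mul a b : central a -> central b -> central (a ** b).
Proof. intros Ha Hb w. rewrite <- mA, Hb, mA, Ha, mA. reflexivity. Qed.

Lemma comm_central_l c x y : central c -> comm G (c ** x) y = comm G x y.
Proof.
  intro Hc. unfold comm. rewrite inv_mul.
  assert (E1 : iv x ** iv c ** iv y = iv x ** iv y ** iv c).
  { rewrite <- !mA, (central_inv Hc (iv y)). reflexivity. }
  assert (E2 : c ** x ** y = x ** y ** c).
  { rewrite <- mA, Hc. reflexivity. }
  rewrite E1, E2, <- (mA _ (iv c)), (mA (iv c)), (central_inv Hc), mKVr. reflexivity.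
Qed.
Lemma comm_central_r c x y : central c -> comm G x (c ** y) = comm G x y.
Proof.
  intro Hc. unfold comm. rewrite inv_mul.
  assert (E2 : x ** (c ** y) = c ** (x ** y)).
  { rewrite mA, <- (Hc x), mA. reflexivity. }
  rewrite E2, (mA (iv x)), <- (mA _ (iv c)), mVK. reflexivity.
Qed.

Lemma npow_S g n : npow G g (S n) = npow G g n ** g. Proof. reflexivity. Qed.
Lemma npow_0 g : npow G g 0 = e. Proof. reflexivity. Qed.
Lemma npow_add g m n : npow G g (m + n) = npow G g m ** npow G g n.
Proof.
  induction n. rewrite Nat.add_0_r, npow_0, m1r. reflexivity.
  rewrite Nat.add_succ_r, !npow_S, IHn, mA. reflexivity.
Qed.
Lemma npow_1 g : npow G g 1 = g. Proof. apply m1. Qed.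
Lemma npow_comm g n : npow G g n ** g = g ** npow G g n.
Proof. rewrite <- npow_S. replace (S n) with (1 + n) by lia. rewrite npow_add, npow_1. reflexivity. Qed.
Lemma npow_mul g m n : npow G g (m * n) = npow G (npow G g m) n.
Proof.
  induction n. rewrite Nat.mul_0_r. reflexivity.
  rewrite npow_S, <- IHn. replace (m * S n) with (m * n + m) by lia. apply npow_add.
Qed.
Lemma npow_e n : npow G e n = e.
Proof. induction n. reflexivity. rewrite npow_S, IHn, m1. reflexivity. Qed.
Lemma npow_inv g n : npow G (iv g) n = iv (npow G g n).
Proof.
  induction n. simpl. rewrite inv_e. reflexivity.
  rewrite !npow_S, IHn, <- inv_mul, npow_comm. reflexivity.
Qed.
Lemma npow_commute x y n : x ** y = y ** x -> npow G (x ** y) n = npow G x n ** npow G y n.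
Proof.
  intro Hxy. assert (Hy : forall k, npow G y k ** x = x ** npow G y k).
  { induction k. rewrite npow_0, m1, m1r. reflexivity.
    rewrite npow_S, <- mA, <- Hxy, mA, IHk, mA. reflexivity. }
  induction n. rewrite !npow_0, m1. reflexivity.
  rewrite !npow_S, IHn. rewrite <- (mA (npow G x n)), (mA (npow G y n) x), Hy. rewrite !mA. reflexivity.
Qed.

Lemma zpow_succ g z : zpow G g (z + 1) = zpow G g z ** g.
Proof.
  destruct z as [|p|p].
  - simpl. rewrite ?m1; reflexivity.
  - simpl. rewrite Pos2Nat.inj_add. simpl. rewrite Nat.add_1_r. reflexivity.
  - destruct (Pos.eq_dec p 1) as [->|Hp].
    + subst. simpl. rewrite m1, mV. reflexivity.
    + assert (E : (Z.neg p + 1 = Z.neg (p - 1))%Z) by lia. rewrite E. simpl.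
      assert (E2 : Pos.to_nat p = S (Pos.to_nat (p - 1))) by lia.
      rewrite E2, npow_S, npow_comm, inv_mul, mKVr. reflexivity.
Qed.
Lemma zpow_pred g z : zpow G g (z - 1) = zpow G g z ** iv g.
Proof.
  rewrite <- (Z.sub_add 1 z) at 2. rewrite zpow_succ, mKr. reflexivity.
Qed.
Lemma zpow_0 g : zpow G g 0 = e. Proof. reflexivity. Qed.
Lemma zpow_1 g : zpow G g 1 = g. Proof. apply m1. Qed.
Lemma zpow_add g a b : zpow G g (a + b) = zpow G g a ** zpow G g b.
Proof.
  induction b using Z.peano_ind.
  - rewrite Z.add_0_r, zpow_0, m1r. reflexivity.
  - rewrite <- Z.add_1_r, Z.add_assoc, !zpow_succ, IHb, mA. reflexivity.
  - rewrite <- Z.sub_1_r, Z.add_sub_assoc, !zpow_pred, IHb, mA. reflexivity.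
Qed.
Lemma zpow_opp g a : zpow G g (- a) = iv (zpow G g a).
Proof. apply inv_uniq. rewrite <- zpow_add. replace (a + - a)%Z with 0%Z by lia. reflexivity. Qed.
Lemma zpow_mul g a b : zpow G (zpow G g a) b = zpow G g (a * b).
Proof.
  induction b using Z.peano_ind.
  - rewrite Z.mul_0_r. reflexivity.
  - rewrite <- Z.add_1_r, zpow_succ, IHb, Z.mul_add_distr_l, Z.mul_1_r, zpow_add. reflexivity.
  - rewrite <- Z.sub_1_r, zpow_pred, IHb, Z.mul_sub_distr_l, Z.mul_1_r, <- Z.add_opp_r, zpow_add, zpow_opp.
    reflexivity.
Qed.


Section NTheory.
Variable N : G -> Prop.
Hypothesis N1 : N e.
Hypothesis NM : forall x y, N x -> N y -> N (x ** y).
Hypothesis NV : forall x, N x -> N (iv x).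
Hypothesis NC : forall x y, N (comm G x y).
Set Default Proof Using "All".

Definition eqv x y := N (iv x ** y).

Lemma N_conj x g : N x -> N (iv g ** x ** g).
Proof.
  intro Hx. assert (E : iv g ** x ** g = x ** comm G x g).
  { unfold comm. rewrite (mA x), (mA x), mVr, m1, !mA. reflexivity. }
  rewrite E. auto.
Qed.
Lemma N_conj' x g : N x -> N (g ** x ** iv g).
Proof. intro Hx. rewrite <- (inv_inv g) at 1. apply N_conj; auto. Qed.

Lemma eqv_refl x : eqv x x. Proof. unfold eqv. rewrite mV. auto. Qed.
Lemma eqv_sym x y : eqv x y -> eqv y x.
Proof. unfold eqv. intro H. apply NV in H. rewrite inv_mul, inv_inv in H. exact H. Qed.
Lemma eqv_trans x y z : eqv x y -> eqv y z -> eqv x z.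
Proof. unfold eqv. intros H1 H2. pose proof (NM H1 H2) as H. rewrite <- mA, mKV in H. exact H. Qed.

#[local] Instance eqv_Equiv : Equivalence eqv.
Proof. split. intro; apply eqv_refl. intros ? ?; apply eqv_sym. intros ? ? ?; apply eqv_trans. Qed.

#[local] Instance mul_Proper : Proper (eqv ==> eqv ==> eqv) (gmul G).
Proof.
  intros x x' Hx y y' Hy. unfold eqv in *.
  assert (E : iv (x ** y) ** (x' ** y') = (iv y ** (iv x ** x') ** y) ** (iv y ** y')).
  { rewrite inv_mul, <- !mA, mKV, !mA. reflexivity. }
  rewrite E. apply NM; auto. apply N_conj; auto.
Qed.

#[local] Instance inv_Proper : Proper (eqv ==> eqv) iv.
Proof.
  intros x x' Hx. unfold eqv in *. rewrite inv_inv.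
  assert (E : x ** iv x' = x ** (iv (iv x ** x')) ** iv x).
  { rewrite inv_mul, inv_inv, <- !mA, mVr, m1r. reflexivity. }
  rewrite E. apply N_conj'. auto.
Qed.

Lemma eqv_comm x y : eqv (x ** y) (y ** x).
Proof. unfold eqv. rewrite inv_mul. apply NC. Qed.
Lemma N_eqv x : N x <-> eqv x e.
Proof. unfold eqv. rewrite m1r. split; intro H. apply NV; auto. apply NV in H. rewrite inv_inv in H. auto. Qed.
Lemma N_eqv_compat x y : eqv x y -> N x -> N y.
Proof. intros H Hx. apply N_eqv. apply N_eqv in Hx. rewrite <- H. exact Hx. Qed.

Lemma eqv_mul4 a b c d : eqv ((a ** b) ** (c ** d)) ((a ** c) ** (b ** d)).
Proof.
  rewrite <- !mA, (mA b c d), (eqv_comm b c), <- (mA c b d). reflexivity.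
Qed.

Lemma eqv_eq x y : x = y -> eqv x y. Proof. intros ->. reflexivity. Qed.

Lemma zpow_mulN x y a : eqv (zpow G (x ** y) a) (zpow G x a ** zpow G y a).
Proof.
  induction a using Z.peano_ind.
  - rewrite !zpow_0, m1. reflexivity.
  - rewrite <- Z.add_1_r, !zpow_succ, IHa. apply eqv_mul4.
  - rewrite <- Z.sub_1_r, !zpow_pred, IHa, inv_mul.
    rewrite (eqv_comm (iv y) (iv x)). apply eqv_mul4.
Qed.

Lemma npow_mulN x y n : eqv (npow G (x ** y) n) (npow G x n ** npow G y n).
Proof.
  induction n. rewrite !npow_0, m1. reflexivity. rewrite !npow_S, IHn. apply eqv_mul4.
Qed.
Lemma N_npow x n : N x -> N (npow G x n).
Proof. intro Hx. induction n. apply N1. rewrite npow_S. auto. Qed.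

Definition zadd (ns ms : list Z) := map (fun p => (fst p + snd p)%Z) (combine ns ms).

Lemma lincomb_nil ns : lincomb G [] ns = e. Proof. destruct ns; reflexivity. Qed.

Lemma lincomb_add gs ns ms : length ns = length gs -> length ms = length gs ->
  eqv (lincomb G gs (zadd ns ms)) (lincomb G gs ns ** lincomb G gs ms).
Proof.
  revert ns ms. induction gs as [|g gs IH]; intros [|n ns] [|m ms] H1 H2; simpl in *; try discriminate.
  - rewrite m1. reflexivity.
  - injection H1; injection H2; intros. unfold zadd in IH.
    rewrite zpow_add, IH by auto. apply eqv_mul4.
Qed.

Lemma lincomb_opp gs ns :
  eqv (lincomb G gs (map Z.opp ns)) (iv (lincomb G gs ns)).
Proof.
  revert ns. induction gs as [|g gs IH]; intros [|n ns]; simpl; try (rewrite inv_e; reflexivity).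
  rewrite zpow_opp, IH, inv_mul, eqv_comm. reflexivity.
Qed.

Lemma lincomb_zeros gs : lincomb G gs (repeat 0%Z (length gs)) = e.
Proof. induction gs; simpl. reflexivity. rewrite IHgs, m1. reflexivity. Qed.

Lemma lincomb_app a b n m : length n = length a ->
  lincomb G (a ++ b) (n ++ m) = lincomb G a n ** lincomb G b m.
Proof.
  revert n. induction a; intros [|x n] H; simpl in *; try discriminate.
  - rewrite m1. reflexivity.
  - rewrite IHa by lia. apply mA.
Qed.

Definition SpanG (gs : list G) := gen G (fun y => In y gs \/ N y).

Lemma SpanG_zpow gs x a : SpanG gs x -> SpanG gs (zpow G x a).
Proof.
  intro Hx. destruct a as [|p|p]; simpl.
  - apply gen_one.
  - induction (Pos.to_nat p). apply gen_one. simpl. apply gen_mul; auto.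
  - apply gen_inv. induction (Pos.to_nat p). apply gen_one. simpl. apply gen_mul; auto.
Qed.

Lemma lincomb_SpanG gs ns : SpanG gs (lincomb G gs ns).
Proof.
  revert ns. induction gs as [|g gs IH]; intros [|n ns]; simpl; try apply gen_one.
  apply gen_mul. apply SpanG_zpow. apply gen_in. left; left; auto.
  specialize (IH ns). unfold SpanG in *. clear -IH.
  induction IH. apply gen_in. destruct H; auto. left; right; auto. apply gen_one.
  apply gen_mul; auto. apply gen_inv; auto.
Qed.

Lemma SpanG_lincomb gs x : SpanG gs x ->
  exists ns, length ns = length gs /\ eqv x (lincomb G gs ns).
Proof.
  intro H. induction H as [x [Hin|Hn]| |x y _ [n [Hn Ex]] _ [m [Hm Ey]]|x _ [n [Hn Ex]]].
  - clear -Hin N1 NM NV NC. induction gs as [|g gs IH]. destruct Hin.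
    destruct Hin as [->|Hin].
    + exists (1%Z :: repeat 0%Z (length gs)). simpl. rewrite repeat_length, lincomb_zeros, m1r, m1. split; reflexivity.

    + destruct (IH Hin) as [ns [Hl E]]. exists (0%Z :: ns). simpl. rewrite m1. split; [now rewrite Hl | exact E].
  - exists (repeat 0%Z (length gs)). rewrite repeat_length, lincomb_zeros. split; [reflexivity|]. apply N_eqv in Hn. exact Hn.
  - exists (repeat 0%Z (length gs)). rewrite repeat_length, lincomb_zeros. split; reflexivity.
  - exists (zadd n m). split. unfold zadd. rewrite length_map, length_combine. lia.
    rewrite lincomb_add by auto. rewrite Ex, Ey. reflexivity.
  - exists (map Z.opp n). rewrite length_map, lincomb_opp, Ex. split; auto. reflexivity.
Qed.

Lemma SpanG_trans A B x : Forall (SpanG B) A -> SpanG A x -> SpanG B x.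
Proof.
  intros HA H. induction H as [x [Hin|Hn]| | |].
  - rewrite Forall_forall in HA. auto.
  - apply gen_in. auto.
  - apply gen_one.
  - apply gen_mul; auto.
  - apply gen_inv; auto.
Qed.

Lemma SpanG_mono A B x : (forall y, In y A -> In y B) -> SpanG A x -> SpanG B x.
Proof.
  intros HAB H. induction H as [x [Hin|Hn]| | |].
  - apply gen_in. auto.
  - apply gen_in. auto.
  - apply gen_one.
  - apply gen_mul; auto.
  - apply gen_inv; auto.
Qed.

Lemma SpanG_eqv gs x y : eqv x y -> SpanG gs x -> SpanG gs y.
Proof.
  intros E Hx. replace y with (x ** (iv x ** y)) by apply mKV.
  apply gen_mul; auto. apply gen_in. right. exact E.
Qed.

Lemma SpanG_self A : Forall (SpanG A) A.
Proof. apply Forall_forall. intros. apply gen_in. auto. Qed.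


Section Euclid.
Hypothesis NT : forall x n, (0 < n)%nat -> N (npow G x n) -> N x.
Variable S : G -> Prop.
Hypothesis S1 : S e.
Hypothesis SM : forall x y, S x -> S y -> S (x ** y).
Hypothesis SV : forall x, S x -> S (iv x).

Lemma S_zpow x a : S x -> S (zpow G x a).
Proof.
  intro Hx. destruct a as [|p|p]; simpl.
  - auto.
  - induction (Pos.to_nat p). auto. simpl. auto.
  - apply SV. induction (Pos.to_nat p). auto. simpl. auto.
Qed.

Lemma N_zpow_nz x a : a <> 0%Z -> N (zpow G x a) -> N x.
Proof.
  intros Ha H. destruct a as [|p|p]; simpl in H.
  - contradiction.
  - apply (@NT x (Pos.to_nat p)); auto. lia.
  - apply NV in H. rewrite inv_inv in H. apply (@NT x (Pos.to_nat p)); auto. lia.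
Qed.

Definition lc (ps : list (G * Z)) := fold_right (fun p acc => zpow G (fst p) (snd p) ** acc) e ps.

Lemma lc_perm ps qs : Permutation ps qs -> eqv (lc ps) (lc qs).
Proof.
  induction 1; simpl.
  - reflexivity.
  - rewrite IHPermutation. reflexivity.
  - rewrite !mA, (eqv_comm (zpow G (fst y) (snd y))). reflexivity.
  - etransitivity; eauto.
Qed.

Lemma lincomb_lc gs ns : lincomb G gs ns = lc (combine gs ns).
Proof. revert ns. induction gs; intros [|n ns]; simpl; auto. rewrite IHgs. reflexivity. Qed.

Definition meas (ps : list (G * Z)) : nat := fold_right (fun p acc => Z.abs_nat (snd p) + acc)%nat 0%nat ps.

Lemma meas_perm ps qs : Permutation ps qs -> meas ps = meas qs.
Proof. induction 1; simpl; lia. Qed.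

Lemma exists_perm {A} (P : A -> Prop) l : Exists P l -> exists x r, P x /\ Permutation l (x :: r).
Proof.
  intro H. apply Exists_exists in H. destruct H as [x [Hin Hx]].
  apply in_split in Hin. destruct Hin as [l1 [l2 ->]]. exists x, (l1 ++ l2). split; auto.
  apply Permutation_sym, Permutation_middle.
Qed.

Lemma Forall_perm {A} (P : A -> Prop) l l' : Permutation l l' -> Forall P l -> Forall P l'.
Proof.
  intros Hp H. rewrite Forall_forall in *. intros x Hx. apply H. apply Permutation_in with l'; auto.
  apply Permutation_sym; auto.
Qed.

Lemma Exists_perm {A} (P : A -> Prop) l l' : Permutation l l' -> Exists P l -> Exists P l'.
Proof.
  intros Hp H. rewrite Exists_exists in *. destruct H as [x [Hx Px]]. exists x. split; auto.
  apply Permutation_in with l; auto.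
Qed.

Definition Pre (ps : list (G * Z)) := Forall (fun p => S (fst p)) ps /\ N (lc ps) /\ Exists (fun p => snd p <> 0%Z) ps.
Definition Res (ps : list (G * Z)) := exists gs', length gs' = pred (length ps) /\ Forall S gs' /\
   Forall (fun p => SpanG gs' (fst p)) ps.

Lemma Pre_perm ps qs : Permutation ps qs -> Pre ps -> Pre qs.
Proof.
  intros Hp [H1 [H2 H3]]. split; [|split].
  - apply (Forall_perm Hp H1).
  - eapply N_eqv_compat; eauto. apply lc_perm; auto.
  - apply (Exists_perm Hp H3).
Qed.

Lemma Res_perm ps qs : Permutation ps qs -> Res qs -> Res ps.
Proof.
  intros Hp [gs' [H1 [H2 H3]]]. exists gs'. split; [|split]; auto.
  - rewrite H1. rewrite (Permutation_length Hp). auto.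
  - apply (Forall_perm (Permutation_sym Hp) H3).
Qed.

Lemma lc_zero r : Forall (fun p : G * Z => snd p = 0%Z) r -> lc r = e.
Proof.
  induction 1; simpl. auto. destruct x as [x z]. simpl in *.
  assert (z = 0%Z) by lia. subst. rewrite IHForall. apply m1.
Qed.

Lemma step_abs a b c : a <> 0%Z -> b <> 0%Z -> (Z.abs b <= Z.abs a)%Z -> c = (Z.sgn a * Z.sgn b)%Z ->
  (Z.abs_nat (a - c * b) < Z.abs_nat a)%nat.
Proof.
  intros Ha Hb Hab Hc.
  subst c. lia.
Qed.

Lemma step g a h b r :
  a <> 0%Z -> b <> 0%Z -> (Z.abs b <= Z.abs a)%Z ->
  Pre ((g, a) :: (h, b) :: r) ->
  (forall qs, (meas qs < meas ((g, a) :: (h, b) :: r))%nat -> Pre qs -> Res qs) ->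
  Res ((g, a) :: (h, b) :: r).
Proof.
  intros Ha Hb Hab [HS [HN HE]] IH.
  set (c := (Z.sgn a * Z.sgn b)%Z).
  set (qs := (g, (a - c * b)%Z) :: (h ** zpow G g c, b) :: r).
  inversion HS as [|? ? Sg HS1]; subst. inversion HS1 as [|? ? Sh HSr]; subst. simpl in Sg, Sh.
  assert (Hq : Pre qs).
  { split; [|split].
    - constructor. simpl. auto. constructor. simpl. apply SM; auto. apply S_zpow; auto. auto.
    - eapply N_eqv_compat; [|exact HN]. unfold qs. simpl.
      rewrite (zpow_mulN h (zpow G g c) b), zpow_mul.
      replace a with ((a - c * b) + c * b)%Z at 1 by lia. rewrite zpow_add.
      rewrite <- (mA (zpow G g (a - c * b))). apply mul_Proper. reflexivity.
      rewrite !mA. apply mul_Proper; [apply eqv_comm | reflexivity].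
    - constructor 2. constructor 1. simpl. auto. }
  assert (Hm : (meas qs < meas ((g, a) :: (h, b) :: r))%nat).
  { unfold qs. simpl. pose proof (step_abs Ha Hb Hab (eq_refl c)). lia. }
  destruct (IH qs Hm Hq) as [gs' [Hl [HSg HF]]].
  exists gs'. split; [|split]; auto.
  unfold qs in HF. inversion HF as [|? ? Fg HF1]; subst. inversion HF1 as [|? ? Fh HFr]; subst.
  simpl in Fg, Fh. constructor; auto. constructor; auto. simpl.
  replace h with ((h ** zpow G g c) ** iv (zpow G g c)) by apply mKr.
  apply gen_mul; auto. apply gen_inv. apply SpanG_zpow. auto.
Qed.

Lemma euclid : forall m ps, meas ps = m -> Pre ps -> Res ps.
Proof.
  intro m. induction m as [m IH] using lt_wf_ind. intros ps Hm Hpre.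
  destruct Hpre as [HS [HN HE]] eqn:EP.
  destruct (exists_perm HE) as [[g a] [rest [Ha Hp]]]. simpl in Ha.
  apply (Res_perm Hp).
  pose proof (Pre_perm Hp (conj HS (conj HN HE))) as Hpre'.
  destruct (Forall_Exists_dec (fun p : G * Z => snd p = 0%Z)
              (fun p => Z.eq_dec (snd p) 0) rest)
    as [Hz|Hnz].
  - destruct Hpre' as [HS' [HN' _]]. simpl in HN'. rewrite (lc_zero Hz), m1r in HN'.
    apply N_zpow_nz in HN'; auto.
    exists (map fst rest). split; [|split].
    + rewrite length_map. reflexivity.
    + inversion HS'; subst. apply Forall_map. auto.
    + constructor. simpl. apply gen_in. right. auto.
      apply Forall_forall. intros p Hin. apply gen_in. left. apply in_map. auto.
  - destruct (exists_perm Hnz) as [[h b] [rest' [Hb Hr]]]. simpl in Hb.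
    assert (Hp2 : Permutation ((g, a) :: rest) ((g, a) :: (h, b) :: rest')) by (constructor; auto).
    apply (Res_perm Hp2). pose proof (Pre_perm Hp2 Hpre') as Hpre2.
    assert (IH' : forall qs, (meas qs < meas ((g, a) :: (h, b) :: rest'))%nat -> Pre qs -> Res qs).
    { intros qs Hlt Hq. apply (IH (meas qs)); auto.
      rewrite <- Hm, (meas_perm Hp), (meas_perm Hp2). auto. }
    destruct (Z.le_gt_cases (Z.abs b) (Z.abs a)).
    + apply step; auto.
    + assert (Hsw : Permutation ((g, a) :: (h, b) :: rest') ((h, b) :: (g, a) :: rest')) by constructor.
      apply (Res_perm Hsw). apply step; auto. lia.
      eapply Pre_perm; eauto.
      intros qs Hlt. apply IH'. rewrite (meas_perm Hsw). auto.
Qed.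

Definition indep bs := forall ns, length ns = length bs -> N (lincomb G bs ns) -> Forall (fun n => n = 0%Z) ns.

Lemma combine_nz gs ns : length ns = length gs -> ~ Forall (fun n => n = 0%Z) ns ->
  Exists (fun p : G * Z => snd p <> 0%Z) (combine gs ns).
Proof.
  revert ns. induction gs; intros [|n ns] Hl Hf; simpl in *; try discriminate.
  - exfalso. apply Hf. constructor.
  - destruct (Z.eq_dec n 0).
    + subst. constructor 2. apply IHgs. lia. intro. apply Hf. constructor; auto.
    + constructor 1. auto.
Qed.

Lemma combine_fst_Forall (Q : G -> Prop) gs ns : length ns = length gs ->
  Forall (fun p : G * Z => Q (fst p)) (combine gs ns) <-> Forall Q gs.
Proof.
  revert ns. induction gs; intros [|n ns] Hl; simpl in *; try discriminate.
  - split; constructor.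
  - split; intro H; inversion H; subst; constructor; auto; apply (IHgs ns); auto.
Qed.

Lemma free_basis : forall n gs, length gs = n -> Forall S gs ->
  exists bs, Forall S bs /\ Forall (SpanG bs) gs /\ indep bs.
Proof.
  intro n. induction n as [n IH] using lt_wf_ind. intros gs Hl HS.
  destruct (classic (indep gs)) as [Hi|Hi].
  - exists gs. split; [|split]; auto. apply SpanG_self.
  - unfold indep in Hi. apply not_all_ex_not in Hi. destruct Hi as [ns Hns].
    apply imply_to_and in Hns. destruct Hns as [Hlen Hns].
    apply imply_to_and in Hns. destruct Hns as [HN Hnz].
    assert (Hpre : Pre (combine gs ns)).
    { split; [|split].
      - apply combine_fst_Forall; auto.
      - rewrite <- lincomb_lc. auto.
      - apply combine_nz; auto. }
    destruct (euclid eq_refl Hpre) as [gs' [Hl' [HS' HF]]].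
    rewrite length_combine, Hlen, Nat.min_id in Hl'.
    assert (Hn : (0 < n)%nat).
    { destruct gs. exfalso. apply Hnz. destruct ns; simpl in Hlen; try discriminate. constructor.
      simpl in Hl. lia. }
    destruct (IH (pred n) ltac:(lia) gs' ltac:(lia) HS') as [bs [HSb [HFb Hib]]].
    exists bs. split; [|split]; auto.
    apply combine_fst_Forall in HF; auto.
    rewrite Forall_forall in HF |- *. intros x Hx. apply SpanG_trans with gs'; auto.
Qed.

End Euclid.
End NTheory.

Definition D := derived G.
Definition T := ab_torsion G.

Lemma D1 : D e. Proof. apply gen_one. Qed.
Lemma DM x y : D x -> D y -> D (x ** y). Proof. apply gen_mul. Qed.
Lemma DV x : D x -> D (iv x). Proof. apply gen_inv. Qed.
Lemma DC x y : D (comm G x y). Proof. apply gen_in. exists x, y. split; simpl; auto. Qed.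

Lemma T1 : T e. Proof. exists 1%nat. split. lia. rewrite npow_1. apply D1. Qed.
Lemma TC x y : T (comm G x y). Proof. exists 1%nat. split. lia. rewrite npow_1. apply DC. Qed.
Lemma TV x : T x -> T (iv x).
Proof. intros [n [Hn Hd]]. exists n. split; auto. rewrite npow_inv. apply DV; auto. Qed.
Lemma TM x y : T x -> T y -> T (x ** y).
Proof.
  intros [n [Hn Hx]] [m [Hm Hy]]. exists (n * m)%nat. split. lia.
  eapply (N_eqv_compat D D1 DM DV DC).
  { apply (eqv_sym D D1 DM DV DC). apply (npow_mulN D D1 DM DV DC). }
  apply DM.
  - rewrite npow_mul. apply (N_npow D D1 DM DV DC); auto.
  - rewrite Nat.mul_comm, npow_mul. apply (N_npow D D1 DM DV DC); auto.
Qed.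
Lemma TT x n : (0 < n)%nat -> T (npow G x n) -> T x.
Proof.
  intros Hn [m [Hm Hd]]. exists (n * m)%nat. split. lia. rewrite npow_mul. auto.
Qed.

#[local] Instance eqvT_Equiv : Equivalence (eqv T) := eqv_Equiv T T1 TM TV TC.
#[local] Instance mulT_Proper : Proper (eqv T ==> eqv T ==> eqv T) (gmul G) := mul_Proper T T1 TM TV TC.
#[local] Instance invT_Proper : Proper (eqv T ==> eqv T) iv := inv_Proper T T1 TM TV TC.

Lemma central_e : central e.
Proof. intro w. rewrite m1, m1r. reflexivity. Qed.
Lemma central_npow c n : central c -> central (npow G c n).
Proof. intro Hc. induction n. apply central_e. rewrite npow_S. apply central_mul; auto. Qed.
Lemma central_zpow c a : central c -> central (zpow G c a).
Proof.
  intro Hc. destruct a; simpl. apply central_e. apply central_npow; auto.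
  apply central_inv, central_npow; auto.
Qed.
Lemma central_conj c g : central c -> iv g ** c ** g = c.
Proof. intro Hc. rewrite <- Hc, mKVr. reflexivity. Qed.

Lemma dirB : (exists z, center G z /\ ab_primitive G z) -> has_nontrivial_abelian_direct_factor G.
Proof.
  intros [z [Hz [bs [Hspan Hind]]]].
  assert (Cz : central z) by exact Hz.
  set (H := fun x => exists a, x = zpow G z a).
  set (K := SpanG T bs).
  exists H, K. split; [|split; [|split; [|split; [|split]]]].
  - split; [split; [|split]|].
    + exists 0%Z. reflexivity.
    + intros x y [a ->] [b ->]. exists (a + b)%Z. rewrite zpow_add. reflexivity.
    + intros x [a ->]. exists (- a)%Z. rewrite zpow_opp. reflexivity.
    + intros x g [a ->]. exists a. apply central_conj, central_zpow; auto.
  - split; [split; [|split]|].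
    + apply gen_one.
    + intros. apply gen_mul; auto.
    + intros. apply gen_inv; auto.
    + intros x g Hx. apply (SpanG_eqv (N:=T) T1 TM TV TC) with x; auto.
      unfold eqv. replace (iv x ** (iv g ** x ** g)) with (comm G x g). apply TC.
      unfold comm. rewrite !mA. reflexivity.
  - intros x [a ->] Hk.
    destruct (SpanG_lincomb (N:=T) T1 TM TV TC Hk) as [ms [Hl E]].
    assert (Ht : T (lincomb G (z :: bs) ((- a)%Z :: ms))).
    { simpl. apply (N_eqv T T1 TM TV TC). rewrite <- E, zpow_opp, mV. reflexivity. }
    apply Hind in Ht; [|simpl; lia]. inversion Ht; subst.
    replace a with 0%Z by lia. reflexivity.
  - intro g. destruct (Hspan g) as [[|a ms] [Hl E]]; [discriminate|].
    simpl in E, Hl. exists (zpow G z a), (iv (zpow G z a) ** g). split; [|split].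
    + exists a. reflexivity.
    + apply (SpanG_eqv (N:=T) T1 TM TV TC) with (lincomb G bs ms).
      * change (eqv T (lincomb G bs ms) (iv (zpow G z a) ** g)).
        change (eqv T g (zpow G z a ** lincomb G bs ms)) in E.
        rewrite E, mVK. reflexivity.
      * apply (lincomb_SpanG T T1 TM TV TC).
    + rewrite mKV. reflexivity.
  - intros x y [a ->] [b ->]. apply central_zpow; auto.
  - exists z. split. exists 1%Z. rewrite zpow_1. reflexivity.
    intro Ez. specialize (Hind (1%Z :: repeat 0%Z (length bs))).
    simpl in Hind. rewrite repeat_length, (lincomb_zeros T T1 TM TV TC), m1r, m1, Ez in Hind.
    specialize (Hind eq_refl T1). inversion Hind. discriminate.
Qed.

Lemma gen_SpanG_T A y : gen G (fun x => In x A) y -> SpanG T A y.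
Proof.
  induction 1. apply gen_in. left. auto. apply gen_one. apply gen_mul; auto. apply gen_inv; auto.
Qed.

Lemma SpanG_nil_T y : SpanG T [] y -> T y.
Proof.
  induction 1 as [x [Hin|Hn]| | |]. destruct Hin. auto. apply T1. apply TM; auto. apply TV; auto.
Qed.

Lemma dirA : finitely_generated G -> torsion_free G -> has_nontrivial_abelian_direct_factor G ->
  exists z, center G z /\ ab_primitive G z.
Proof.
  intros [l Hl] Htf [H [K [[[H1 [HM HV]] Hconj] [[[K1 [KM KV]] Kconj] [Hint [Hdec [Hab [h0 [Hh0 Hh0e]]]]]]]]].
  assert (HKc : forall h k, H h -> K k -> h ** k = k ** h).
  { intros h k Hh Hk. apply comm_e. apply Hint.
    - unfold comm. rewrite <- mA, (mA (iv k)). apply HM; auto.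
    - unfold comm. rewrite (mA _ h k). apply KM; auto. }
  assert (Hcen : forall h, H h -> central h).
  { intros h Hh w. destruct (Hdec w) as [h' [k' [Hh' [Hk' ->]]]].
    rewrite mA, (Hab h h'), <- mA, (HKc h k'), mA; auto. }
  assert (Huniq : forall h k h' k', H h -> K k -> H h' -> K k' -> h ** k = h' ** k' -> h = h' /\ k = k').
  { intros h k h' k' Hh Hk Hh' Hk' E.
    assert (E2 : iv h' ** h = k' ** iv k).
    { rewrite <- (mKr (iv h' ** h) k), <- (mA (iv h')), E, mVK. reflexivity. }
    assert (E3 : iv h' ** h = e). { apply Hint. apply HM; auto. rewrite E2. apply KM; auto. }
    apply inv_uniq in E3. rewrite inv_inv in E3. subst h'. split; auto.
    apply cancel_l in E. auto. }
  assert (DK : forall g, D g -> K g).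
  { intros g Hg. unfold D, derived in Hg. simpl in Hg. induction Hg as [c [x [y [_ ->]]]| | |]; auto.
    destruct (Hdec x) as [h1 [k1 [Hh1 [Hk1 ->]]]]. destruct (Hdec y) as [h2 [k2 [Hh2 [Hk2 ->]]]].
    rewrite comm_central_l, comm_central_r; auto. unfold comm. apply KM; apply KM; auto. }
  assert (Hnp : forall (P : G -> Prop), P e -> (forall x y, P x -> P y -> P (x ** y)) ->
             forall x n, P x -> P (npow G x n)).
  { intros P P1 PM x n Px. induction n. auto. rewrite npow_S. auto. }
  assert (Hlists : exists hl kl, Forall H hl /\ Forall K kl /\
     (forall g, In g l -> exists h k, H h /\ K k /\ g = h ** k /\ In h hl /\ In k kl)).
  { clear Hl. induction l as [|g l IH].
    - exists [], []. split; [|split]; auto. intros g [].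
    - destruct IH as [hl [kl [F1 [F2 F3]]]]. destruct (Hdec g) as [h [k [Hh [Hk Eg]]]].
      exists (h :: hl), (k :: kl). split; [|split]; auto.
      intros g' [<-|Hin].
      + exists h, k. simpl. auto 7.
      + destruct (F3 g' Hin) as [h' [k' [? [? [? [? ?]]]]]]. exists h', k'. simpl. auto 7. }
  destruct Hlists as [hl [kl [Fhl [Fkl Hlk]]]].
  assert (Hparts : forall g, gen G (fun x => In x l) g -> forall h k, H h -> K k -> g = h ** k ->
            gen G (fun x => In x hl) h /\ gen G (fun x => In x kl) k).
  { intros g Hg. induction Hg as [g Hin| |x y _ IHx _ IHy|x _ IHx]; intros h k Hh Hk Eg.
    - destruct (Hlk g Hin) as [h' [k' [Hh' [Hk' [E' [I1 I2]]]]]].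
      rewrite Eg in E'. destruct (Huniq _ _ _ _ Hh Hk Hh' Hk' E') as [-> ->].
      split; apply gen_in; auto.
    - rewrite <- (m1 e) in Eg. destruct (Huniq _ _ _ _ H1 K1 Hh Hk Eg) as [<- <-]. split; apply gen_one.
    - destruct (Hdec x) as [h1 [k1 [Hh1 [Hk1 Ex]]]]. destruct (Hdec y) as [h2 [k2 [Hh2 [Hk2 Ey]]]].
      destruct (IHx _ _ Hh1 Hk1 Ex). destruct (IHy _ _ Hh2 Hk2 Ey).
      assert (E : x ** y = (h1 ** h2) ** (k1 ** k2)).
      { rewrite Ex, Ey, <- !mA, (mA k1), <- (HKc h2 k1); auto. rewrite !mA. reflexivity. }
      rewrite Eg in E. destruct (Huniq _ _ _ _ Hh Hk (HM _ _ Hh1 Hh2) (KM _ _ Hk1 Hk2) E) as [-> ->].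
      split; apply gen_mul; auto.
    - destruct (Hdec x) as [h1 [k1 [Hh1 [Hk1 Ex]]]]. destruct (IHx _ _ Hh1 Hk1 Ex).
      assert (E : iv x = iv h1 ** iv k1).
      { rewrite Ex, inv_mul. symmetry. apply HKc; auto. }
      rewrite Eg in E. destruct (Huniq _ _ _ _ Hh Hk (HV _ Hh1) (KV _ Hk1) E) as [-> ->].
      split; apply gen_inv; auto. }
  assert (HS : forall h, H h -> SpanG T hl h).
  { intros h Hh. apply gen_SpanG_T. apply (Hparts h (Hl h) h e); auto. rewrite m1r. auto. }
  assert (KS : forall k, K k -> SpanG T kl k).
  { intros k Hk. apply gen_SpanG_T. apply (Hparts k (Hl k) e k); auto. rewrite m1. auto. }
  assert (TH : forall h, H h -> T h -> h = e).
  { intros h Hh [n [Hn Hd]]. apply (Htf h n Hn). apply Hint. apply Hnp; auto. apply DK. auto. }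
  destruct (free_basis T T1 TM TV TC TT H1 HM HV (eq_refl (length hl)) Fhl) as [hb [Fhb [Shb Ihb]]].
  destruct (free_basis T T1 TM TV TC TT K1 KM KV (eq_refl (length kl)) Fkl) as [kb [Fkb [Skb Ikb]]].
  destruct hb as [|z hb'].
  { exfalso. apply Hh0e. apply TH; auto. apply SpanG_nil_T.
    apply (SpanG_trans (N:=T) T1 TM TV TC (A:=hl)); auto. }
  exists z. split.
  { inversion Fhb; subst. apply Hcen; auto. }
  exists (hb' ++ kb). change (z :: hb' ++ kb) with ((z :: hb') ++ kb). split.
  - intro x. apply (SpanG_lincomb (N:=T) T1 TM TV TC).
    destruct (Hdec x) as [h [k [Hh [Hk ->]]]]. apply gen_mul.
    + apply (SpanG_trans (N:=T) T1 TM TV TC (A:=z :: hb')).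
      * apply Forall_forall. intros y Hy. apply gen_in. left. apply in_or_app. auto.
      * apply (SpanG_trans (N:=T) T1 TM TV TC (A:=hl)); auto.
    + apply (SpanG_trans (N:=T) T1 TM TV TC (A:=kb)).
      * apply Forall_forall. intros y Hy. apply gen_in. left. apply in_or_app. auto.
      * apply (SpanG_trans (N:=T) T1 TM TV TC (A:=kl)); auto.
  - intros ns Hlen Ht.
    set (hb := z :: hb') in *.
    rewrite <- (firstn_skipn (length hb) ns) in Ht |- *.
    assert (Hl1 : length (firstn (length hb) ns) = length hb).
    { rewrite length_firstn, length_app in *. lia. }
    rewrite (lincomb_app T T1 TM TV TC _ _ _ _ Hl1) in Ht.
    set (a := lincomb G hb (firstn (length hb) ns)) in *.
    set (b := lincomb G kb (skipn (length hb) ns)) in *.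
    assert (Ha : H a).
    { unfold a. clear -Fhb H1 HM HV. generalize (firstn (length hb) ns). induction hb as [|g gs IH]; intros [|n0 ns0];
      simpl; auto. inversion Fhb; subst. apply HM; auto. apply (S_zpow T T1 TM TV TC TT H H1 HM HV). auto. }
    assert (Hb : K b).
    { unfold b. clear -Fkb K1 KM KV. generalize (skipn (length hb) ns). induction kb as [|g gs IH]; intros [|n0 ns0];
      simpl; auto. inversion Fkb; subst. apply KM; auto. apply (S_zpow T T1 TM TV TC TT K K1 KM KV). auto. }
    assert (Ea : a = e).
    { destruct Ht as [n [Hn Hd]]. apply (Htf a n Hn). apply Hint. apply Hnp; auto.
      rewrite (npow_commute a b n (HKc a b Ha Hb)) in Hd. apply DK in Hd.
      rewrite <- (mKr (npow G a n) (npow G b n)). apply KM; auto. apply KV. apply Hnp; auto. }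
    apply Forall_app. split.
    + apply Ihb; auto. fold a. rewrite Ea. apply T1.
    + apply Ikb. rewrite length_skipn, length_app in *. simpl in *. lia.
      fold b. rewrite Ea, m1 in Ht. auto.
Qed.

End Basic.

Theorem mainTheorem7 (G : Group) :
  finitely_generated G -> torsion_free G -> nilpotent G ->
  (has_nontrivial_abelian_direct_factor G <->
   exists z : G, center G z /\ ab_primitive G z).
Proof.
  intros Hfg Htf _. split.
  - apply dirA; auto.
  - apply dirB.
Qed.
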